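(* Let $\Lambda$ be a finite cubical complex, $q\ge2$ an integer, $k\ge1$, and $p_{\mathbf{c}}\in(0,1)$ for $\mathbf{c}\in\Lambda_k$. Then, as functions of the $k$-spanning subcomplex $\omega$, $$\Big(\prod_{\mathbf{c}\in\Lambda_k(\omega)}\frac{p_{\mathbf{c}}}{1-p_{\mathbf{c}}}\Big)\frac{|\ker(d^\omega_k)|}{|\mathrm{Im}(d^\omega_{k-1})|}\ \propto\ \Big(\prod_{\mathbf{c}\in\Lambda_k(\omega)}\frac{p_{\mathbf{c}}}{1-p_{\mathbf{c}}}\Big)\frac{|\ker(\partial^\omega_{k-1})|}{|\mathrm{Im}(\partial^\omega_k)|};$$ that is, the plaquette random-cluster model defined with the cohomological weights on the left coincides with the one defined by the weights on the right.
   Context: $\Lambda$ consists of finite sets $\Lambda_j$ of $j$-cells (copies of $\{0,1\}^j$) closed under taking faces $F_i^\pm$; $j$-cells carry two orientations (standard cubical conventions: ordering of edges at a root vertex modulo even permutations, faces inheriting the ordering with $e_i$ removed). $C_j=\{\sigma\in(\mathbb{Z}/q\mathbb{Z})^{\mathcal{O}(\Lambda_j)}\mid\sigma_{-\mathfrak{c}}=-\sigma_{\mathfrak{c}}\}$, $C_0=(\mathbb{Z}/q\mathbb{Z})^{\Lambda_0}$; $\partial_j\mathbf{1}^{\mathfrak{c}}=\sum_{i=1}^j(-1)^{i+1}(\mathbf{1}^{F_i^+(\mathfrak{c})}-\mathbf{1}^{F_i^-(\mathfrak{c})})$ ($j\ge2$), $\partial_1\mathbf{1}^{(v,w)}=\mathbf{1}_w-\mathbf{1}_v$,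 $\partial_0:=0$. Bilinear form $\langle\sigma,\sigma'\rangle=\sum_{\mathbf{c}\in\Lambda_j}\sigma_{\mathfrak{c}}\sigma'_{\mathfrak{c}}$; $d_j:C_{j-1}\to C_j$ is the adjoint of $\partial_j$ (and $d_0:=0$). A $k$-spanning subcomplex $\omega$ contains all cells of dimension $<k$, a set $\Lambda_k(\omega)\subset\Lambda_k$ of $k$-cells and no higher cells. The induced maps on $\omega$: $\partial^\omega_k$ is the restriction of $\partial_k$ to chains supported on $\Lambda_k(\omega)$, $d^\omega_k:C_{k-1}\to C_k(\omega)$ its adjoint (i.e. $d_k$ followed by restriction to $\Lambda_k(\omega)$), and $\partial^\omega_{k-1}=\partial_{k-1}$, $d^\omega_{k-1}=d_{k-1}$. *)

(* Defs.v *)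
From HB Require Import structures.
From mathcomp Require Import all_boot all_order all_algebra.
Set Implicit Arguments. Unset Strict Implicit. Unset Printing Implicit Defensive.
Import Order.TTheory GRing.Theory Num.Theory.
Local Open Scope ring_scope.

(* A finite cubical complex: finite sets cell j of j-cells, with face maps
   F_i^{+/-} : cell j.+1 -> cell j (i is 0-indexed here: i = 0..j stands for
   the paper's i = 1..j+1; the boolean is the sign, true = +), satisfying the
   cubical identities, and with no cells above some dimension. *)
Record cubical_complex := CubicalComplex {
  cell : nat -> finType;
  face : forall n, 'I_n.+1 -> bool -> cell n.+1 -> cell n;
  face_comm : forall n (i : 'I_n.+1) (j : 'I_n.+2) (a b : bool) (x : cell n.+2),
    (i < j)%N ->
    face i a (face j b x) = face (inord j.-1) b (face (widen_ord (leqnSn _) i) a x);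
  fin_dim : exists N, forall j, (N < j)%N -> #|cell j| = 0%N
}.

Section Chains.
Variables (L : cubical_complex) (q : nat).

(* j-chains with coefficients in Z/qZ.  An antisymmetric function on oriented
   j-cells is identified with its values on the reference (positive)
   orientation of each cell. *)
Definition chain (j : nat) := {ffun cell L j -> 'Z_q}.

Definition delta (j : nat) (c : cell L j) : chain j := [ffun c' => (c' == c)%:R].

Definition pairing (j : nat) (s t : chain j) : 'Z_q := \sum_c s c * t c.

(* boundary of an elementary (positively oriented) (m+1)-cell:
   sum_{i=1}^{m+1} (-1)^(i+1) (1^{F_i^+ c} - 1^{F_i^- c}) *)
Definition bd_cell (m : nat) (c : cell L m.+1) : chain m :=
  [ffun c' => \sum_(i < m.+1) (-1) ^+ i *
       ((face i true c == c')%:R - (face i false c == c')%:R)].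

Definition bd (m : nat) (s : chain m.+1) : chain m :=
  [ffun c' => \sum_c s c * bd_cell c c'].

Definition bdry (j : nat) : chain j -> chain j.-1 :=
  match j return chain j -> chain j.-1 with
  | 0 => fun _ => 0
  | m.+1 => @bd m
  end.

Definition cobd (j : nat) (t : chain j.-1) : chain j :=
  [ffun c => pairing t (@bdry j (delta c))].

(* omega is a k-spanning subcomplex, determined by w = Lambda_k(omega). *)

(* ker d^omega_k : d_k followed by restriction to w *)
Definition ker_cobd_om (k : nat) (w : {set cell L k}) : {set chain k.-1} :=
  [set t : chain k.-1 | [forall c in w, @cobd k t c == 0]].

(* Im d^omega_{k-1} = Im d_{k-1} *)
Definition im_cobd (j : nat) : {set chain j} :=
  [set @cobd j t | t in [set: chain j.-1]].

(* ker partial^omega_{k-1} = ker partial_{k-1} *)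
Definition ker_bdry (j : nat) : {set chain j} :=
  [set s : chain j | @bdry j s == 0].

Definition im_bdry_om (k : nat) (w : {set cell L k}) : {set chain k.-1} :=
  [set @bdry k s | s in [set s : chain k | [forall c, (c \notin w) ==> (s c == 0)]]].

End Chains.

Definition cluster_weight (R : realFieldType) (L : cubical_complex) (k : nat)
  (p : cell L k -> R) (w : {set cell L k}) : R :=
  \prod_(c in w) (p c / (1 - p c)).

(* Main.v *)
Require Import Defs.
From HB Require Import structures.
From mathcomp Require Import all_boot all_order all_algebra.
From mathcomp Require Import all_field.
Set Implicit Arguments. Unset Strict Implicit. Unset Printing Implicit Defensive.
Import Order.TTheory GRing.Theory Num.Theory.
Local Open Scope ring_scope.
Section Dual.
Variables (q : nat) (hq : (1 < q)%N) (I : finType).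
Let G := {ffun I -> 'Z_q}.
Definition pr (s t : G) : 'Z_q := \sum_i s i * t i.
Definition perp (H : {set G}) := [set t : G | [forall h in H, pr t h == 0]].

Lemma prDl s s' t : pr (s + s') t = pr s t + pr s' t.
Proof. by rewrite /pr -big_split; apply: eq_bigr => i _; rewrite ffunE mulrDl. Qed.
Lemma prDr s t t' : pr s (t + t') = pr s t + pr s t'.
Proof. by rewrite /pr -big_split; apply: eq_bigr => i _; rewrite ffunE mulrDr. Qed.
Lemma prC s t : pr s t = pr t s.
Proof. by apply: eq_bigr => i _; rewrite mulrC. Qed.
Lemma pr0r s : pr s 0 = 0.
Proof. by rewrite /pr big1 // => i _; rewrite ffunE mulr0. Qed.

Variable z : algC.
Hypothesis hz : q.-primitive_root z.
Definition e (a : 'Z_q) : algC := z ^+ (a : nat).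

Lemma qE : (Zp_trunc q).+2 = q. Proof. exact: Zp_cast. Qed.

Lemma eD a b : e (a + b) = e a * e b.
Proof.
have h n : (n %% (Zp_trunc q).+2 = n %% q)%N by rewrite qE.
by rewrite /e -exprD /= h (expr_mod _ (prim_expr_order hz)).
Qed.

Lemma e0 : e 0 = 1. Proof. by rewrite /e expr0. Qed.

Lemma e_eq1 a : (e a == 1) = (a == 0).
Proof.
rewrite /e -(prim_order_dvd hz); apply/idP/eqP => [|->]; last exact: dvdn0.
case: a => [[|a] Ha] /=; first by move=> _; apply: val_inj.
move=> /(dvdn_leq (ltn0Sn a)).
have Ha' : (a.+1 < q)%N by rewrite -qE.
by rewrite leqNgt Ha'.
Qed.

Lemma sum_char (A : {set G}) (f : G -> algC) a0 :
  (forall x, (x + a0 \in A) = (x \in A)) ->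
  (forall x, f (x + a0) = f x * f a0) -> f a0 != 1 ->
  \sum_(x in A) f x = 0.
Proof.
move=> hA hf hne.
have: \sum_(x in A) f x = (\sum_(x in A) f x) * f a0.
  rewrite {1}(reindex_inj (addIr a0)) /= mulr_suml.
  by apply: eq_big => [x|x _]; [rewrite hA | rewrite hf].
move/eqP; rewrite -subr_eq0 -{1}(mulr1 (\sum_(x in A) _)) -mulrBr mulf_eq0.
by rewrite subr_eq0 (eq_sym 1) (negbTE hne) orbF => /eqP.
Qed.

Lemma dual_card (H : {set G}) :
  0 \in H -> (forall x y, x \in H -> y \in H -> x + y \in H) ->
  (forall x, x \in H -> - x \in H) ->
  (#|H| * #|perp H| = #|G|)%N.
Proof.
move=> H0 HD HN.
have hH a x : a \in H -> (x + a \in H) = (x \in H).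
  move=> Ha; apply/idP/idP => [/(HD _ _ ^~ (HN _ Ha))|/HD]; last exact.
  by rewrite addrK.
apply/eqP; rewrite -(@eqr_nat algC) natrM.
set S := \sum_(t : G) \sum_(h in H) e (pr t h).
have S1 : S = #|perp H|%:R * #|H|%:R.
  rewrite /S (bigID (mem (perp H))) /= [X in _ + X]big1 ?addr0.
    rewrite -sum1_card natr_sum mulr_suml; apply: eq_bigr => t.
    rewrite inE => /forallP Ht; rewrite mul1r -sum1_card natr_sum.
    by apply: eq_bigr => h Hh; move: (Ht h); rewrite Hh /= => /eqP ->; rewrite e0.
  move=> t; rewrite inE => /forallPn [h0]; rewrite negb_imply => /andP [Hh0 nz].
  apply: (sum_char (a0 := h0)) => [x|x|]; first exact: hH.
    by rewrite prDr eD.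
  by rewrite e_eq1.
have S2 : S = #|G|%:R.
  rewrite /S exchange_big /= (bigD1 (0 : G) H0) /= [X in _ + X]big1 ?addr0.
    rewrite -sum1_card natr_sum; apply: eq_bigr => t _.
    by rewrite pr0r e0.
  move=> h /andP [Hh nz].
  have [i hi] : exists i, h i != 0.
    apply/existsP; move: nz; apply: contraR; rewrite negb_exists => /forallP hi.
    by apply/eqP/ffunP => i; rewrite ffunE; apply/eqP; move: (hi i); rewrite negbK.
  pose t0 : G := [ffun i' => (i' == i)%:R].
  rewrite (eq_bigl (fun x => x \in [set: G])); last by move=> x; rewrite inE.
  apply: (sum_char (A := setT) (a0 := t0)) => [x|x|]; first by rewrite !inE.
    by rewrite prDl eD.
  rewrite e_eq1 /pr (bigD1 i) //= big1 => [|j ji]; last by rewrite ffunE (negbTE ji) mul0r.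
  by rewrite addr0 ffunE eqxx mul1r.
by rewrite -S2 S1 mulrC.
Qed.
End Dual.

Section Main.
Variables (L : cubical_complex) (q : nat).

Lemma bdry_pt j (s : chain L q j) x :
  (bdry s) x = \sum_c s c * (bdry (delta q c)) x.
Proof.
case: j s x => [|m] s x /=.
  have z0 : forall y : cell L 0, (0 : chain L q 0) y = 0 by move=> y; rewrite ffunE.
  by rewrite big1 => [|c _]; [exact: z0 x | rewrite (z0 x) mulr0].
rewrite /bd ffunE; apply: eq_bigr => c _; congr (_ * _).
rewrite /bd [RHS]ffunE (bigD1 c) //= big1 => [|c' hc']; last by rewrite /delta ffunE (negbTE hc') mul0r.
by rewrite /delta [in RHS]ffunE eqxx mul1r addr0.
Qed.

Lemma bdryD j (s s' : chain L q j) : bdry (s + s') = bdry s + bdry s'.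
Proof.
apply/ffunP => x; rewrite ffunE !bdry_pt -big_split; apply: eq_bigr => c _.
by rewrite ffunE mulrDl.
Qed.

Lemma bdryN j (s : chain L q j) : bdry (- s) = - bdry s.
Proof.
apply/ffunP => x; rewrite ffunE !bdry_pt -sumrN; apply: eq_bigr => c _.
by rewrite ffunE mulNr.
Qed.

Lemma bdry0 j : bdry (0 : chain L q j) = 0.
Proof.
apply/ffunP => x; rewrite bdry_pt ffunE big1 // => c _.
by rewrite ffunE mul0r.
Qed.

Lemma adj j (t : chain L q j.-1) (s : chain L q j) :
  pairing t (bdry s) = \sum_c s c * pairing t (bdry (delta q c)).
Proof.
rewrite /pairing; under eq_bigr => x _ do rewrite bdry_pt mulr_sumr.
rewrite exchange_big /=; apply: eq_bigr => c _; rewrite mulr_sumr.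
by apply: eq_bigr => x _; rewrite mulrCA.
Qed.

Lemma pairing_delta j (c : cell L j) (x : chain L q j) : pairing (delta q c) x = x c.
Proof.
rewrite /pairing (bigD1 c) //= big1 => [|c' hc']; last by rewrite /delta ffunE (negbTE hc') mul0r.
by rewrite /delta ffunE eqxx mul1r addr0.
Qed.

End Main.

Section Final.
Variables (L : cubical_complex) (q : nat).

Lemma pairingDl j (t t' : chain L q j) s : pairing (t + t') s = pairing t s + pairing t' s.
Proof. exact: prDl. Qed.
Lemma pairingNl j (t : chain L q j) s : pairing (- t) s = - pairing t s.
Proof. by rewrite /pairing -sumrN; apply: eq_bigr => c _; rewrite ffunE mulNr. Qed.
Lemma pairing0l j (s : chain L q j) : pairing 0 s = 0.
Proof. by rewrite /pairing big1 // => c _; rewrite ffunE mul0r. Qed.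
Lemma pairing0r j (s : chain L q j) : pairing s 0 = 0.
Proof. by rewrite /pairing big1 // => c _; rewrite ffunE mulr0. Qed.

Lemma pr_cobd j (s : chain L q j) (t : chain L q j.-1) :
  pairing s (cobd t) = pairing t (bdry s).
Proof. by rewrite adj /pairing; apply: eq_bigr => c _; rewrite ffunE. Qed.

End Final.

Theorem lemmaC3 (R : realFieldType) (L : cubical_complex) (q k : nat)
  (hq : (1 < q)%N) (hk : (0 < k)%N) (p : cell L k -> R)
  (hp : forall c, 0 < p c < 1) :
  exists K : R, 0 < K /\
    forall w : {set cell L k},
      cluster_weight p w *
        (#|ker_cobd_om q w|%:R / #|im_cobd L q k.-1|%:R)
      = K * (cluster_weight p w *
        (#|ker_bdry L q k.-1|%:R / #|im_bdry_om q w|%:R)).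
Proof.
have [z hz] := C_prim_root_exists (ltnW hq).
exists 1; split; first exact: ltr01.
move=> w.
have h1 : ker_cobd_om q w = perp (im_bdry_om q w).
  apply/setP => t; rewrite !inE; apply/forallP/forallP.
    move=> H h; apply/implyP => /imsetP [s]; rewrite inE => /forallP Hs ->.
    rewrite /pr -/(pairing t (bdry s)) adj big1 // => c _.
    case cw: (c \in w).
      by move: (H c); rewrite cw /= ffunE => /eqP ->; rewrite mulr0.
    by move: (Hs c); rewrite cw /= => /eqP ->; rewrite mul0r.
  move=> H c; apply/implyP => cw.
  have := H (bdry (delta q c)); rewrite imset_f /=; last first.
    rewrite inE; apply/forallP => c'; apply/implyP => c'w.
    rewrite ffunE; case: (c' =P c) => [ec|_]; [by rewrite ec cw in c'w | by []].
  by rewrite ffunE.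
have h2 : ker_bdry L q k.-1 = perp (im_cobd L q k.-1).
  apply/setP => s; rewrite !inE; apply/eqP/forallP.
    move=> H0 h; apply/implyP => /imsetP [t _ ->].
    by rewrite /pr -/(pairing s (cobd t)) pr_cobd H0 pairing0r.
  move=> H; apply/ffunP => x; rewrite -pairing_delta -pr_cobd.
  have := H (cobd (delta q x)); rewrite imset_f ?inE //= => /eqP.
  rewrite /pr -/(pairing s (cobd (delta q x))) => ->.
  by rewrite ffunE.
set N := #|{ffun cell L k.-1 -> 'Z_q}|.
have c1 : (#|im_bdry_om q w| * #|ker_cobd_om q w| = N)%N.
  rewrite h1; apply: (dual_card hq hz).
  - by apply/imsetP; exists 0; rewrite ?inE ?bdry0 //; apply/forallP => c; rewrite ffunE eqxx implybT.
  - move=> x y /imsetP [s]; rewrite inE => /forallP Hs -> /imsetP [s']; rewrite inE => /forallP Hs' ->.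
    apply/imsetP; exists (s + s'); rewrite ?bdryD // inE; apply/forallP => c.
    apply/implyP => cw; move: (Hs c) (Hs' c); rewrite cw /= ffunE => /eqP -> /eqP ->.
    by rewrite addr0.
  - move=> x /imsetP [s]; rewrite inE => /forallP Hs ->.
    apply/imsetP; exists (- s); rewrite ?bdryN // inE; apply/forallP => c.
    apply/implyP => cw; move: (Hs c); rewrite cw /= ffunE => /eqP ->.
    by rewrite oppr0.
have c2 : (#|im_cobd L q k.-1| * #|ker_bdry L q k.-1| = N)%N.
  rewrite h2; apply: (dual_card hq hz).
  - apply/imsetP; exists 0; rewrite ?inE //; apply/ffunP => c.
    by rewrite !ffunE pairing0l.
  - move=> x y /imsetP [t _ ->] /imsetP [t' _ ->].
    apply/imsetP; exists (t + t'); rewrite ?inE //; apply/ffunP => c.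
    by rewrite !ffunE pairingDl.
  - move=> x /imsetP [t _ ->].
    apply/imsetP; exists (- t); rewrite ?inE //; apply/ffunP => c.
    by rewrite !ffunE pairingNl.
have Npos : (0 < N)%N by apply/card_gt0P; exists 0.
have d0 : (0 < #|im_bdry_om q w|)%N by move: Npos; rewrite -c1 muln_gt0 => /andP [].
have b0 : (0 < #|im_cobd L q k.-1|)%N by move: Npos; rewrite -c2 muln_gt0 => /andP [].
rewrite mul1r; congr (_ * _); apply/eqP.
rewrite eqr_div ?pnatr_eq0 -?lt0n // -!natrM eqr_nat.
by rewrite mulnC c1 mulnC c2.
Qed.
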